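(* Let $p$ be an odd prime, $e\geq 2$, and $N$ cyclic of order $p^e$. Let $G$ be a transitive subgroup of $\mathrm{Hol}(N)$, $H$ any subgroup of $G$ of index $p^e$, and $C=\mathrm{Core}_G(H)$. The following are equivalent: (1) $G/C$ is isomorphic to a transitive subgroup $T$ of $\mathrm{Hol}(N)$ under an isomorphism that sends $H/C$ to $\mathrm{Stab}_T(1_N)$; (2) $H$ is conjugate to $\mathrm{Stab}_G(1_N)$ in $G$.
   Context: $\mathrm{Hol}(N)=N\rtimes\mathrm{Aut}(N)$ acts on $N$ by $(\eta,\alpha)\cdot x=\eta\,\alpha(x)$; a subgroup is transitive if it acts transitively on $N$, and $\mathrm{Stab}_T(1_N)=T\cap\mathrm{Aut}(N)$ is the stabiliser of the identity. $\mathrm{Core}_G(H)$ is the largest normal subgroup of $G$ contained in $H$. *)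

(* Defs.v *)
From mathcomp Require Import all_boot all_fingroup all_solvable.
Set Implicit Arguments. Unset Strict Implicit. Unset Printing Implicit Defensive.
Local Open Scope group_scope.

(* The holomorph Hol(N) = N x| Aut(N) of N = [set: gT], realised (faithfully)
   as the group of permutations of N of the form x |-> eta * alpha x,
   with eta in N and alpha in Aut(N); this is exactly the action
   (eta, alpha) . x = eta alpha(x). *)
Definition Hol (gT : finGroupType) : {set {perm gT}} :=
  [set s : {perm gT} | [exists eta : gT, exists a in Aut [set: gT],
                          [forall x, s x == eta * a x]]].

(* Main.v *)
Require Import Defs.
From mathcomp Require Import all_boot all_fingroup all_solvable zify.
Set Implicit Arguments. Unset Strict Implicit. Unset Printing Implicit Defensive.

Definition gsum (A n : nat) := \sum_(i < n) A ^ i.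

Lemma gsum0 A : gsum A 0 = 0. Proof. by rewrite /gsum big_ord0. Qed.
Lemma gsumS A n : gsum A n.+1 = gsum A n + A ^ n.
Proof. by rewrite /gsum big_ord_recr. Qed.
Lemma gsumSl A n : gsum A n.+1 = 1 + A * gsum A n.
Proof.
rewrite /gsum big_ord_recl expn0 big_distrr; congr (_ + _).
by apply: eq_bigr => i _; rewrite expnS.
Qed.
Lemma gsum_split A k m : gsum A (k + m) = gsum A k + A ^ k * gsum A m.
Proof.
elim: m => [|m IH]; first by rewrite addn0 gsum0 muln0 addn0.
by rewrite addnS !gsumS IH mulnDr -expnD addnA.
Qed.
Lemma gsum_mul A m n : gsum A (m * n) = gsum A m * gsum (A ^ m) n.
Proof.
elim: n => [|n IH]; first by rewrite muln0 !gsum0 muln0.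
rewrite mulnS addnC gsum_split IH gsumS mulnDr -expnM; congr (_ + _); exact: mulnC.
Qed.
Lemma gsum_tele A n : 0 < A -> gsum A n * (A - 1) + 1 = A ^ n.
Proof.
move=> A0; elim: n => [|n IH]; first by rewrite gsum0.
rewrite gsumS expnS -IH; nia.
Qed.

Lemma gsum_modp p k n : exists M,
  gsum (1 + p * k) n.+1 * 2 = n.+1 * 2 + p * k * (n.+1 * n) + 2 * (p ^ 2 * M).
Proof.
have pw : forall i, exists M, (1 + p * k) ^ i = 1 + i * (p * k) + p ^ 2 * M.
  elim=> [|i [M IH]]; first by exists 0; rewrite expn0 muln0 !addn0.
  exists (M + i * k * k + M * p * k); rewrite expnS IH; nia.
elim: n => [|n [M IH]]; first by exists 0; rewrite gsumS gsum0 /=; lia.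
have [M1 E1] := pw n.+1.
exists (M + M1); rewrite gsumS mulnDl IH E1; nia.
Qed.

Lemma coprime_1p p z : 1 < p -> coprime (1 + p * z) p.
Proof.
move=> p1; rewrite -coprime_modl addnC mulnC modnMDl modn_small //; exact: coprime1n.
Qed.

Lemma gsum_p p B : prime p -> odd p -> B %% p = 1 ->
  exists2 u, coprime u p & gsum B p = p * u.
Proof.
move=> pp op Bp.
have p1 := prime_gt1 pp.
have EB : B = 1 + p * (B %/ p) by rewrite {1}(divn_eq B p) Bp addnC mulnC.
set k := B %/ p in EB; rewrite EB.
have [q Eq] : exists q, p = (q.*2).+1.
  by exists p./2; rewrite -{1}(odd_double_half p) op.
have [M HM] := gsum_modp p k (q.*2).
exists (1 + p * (k * q + M)); first exact: coprime_1p.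
rewrite -Eq in HM.
have : gsum (1 + p * k) p * 2 = (p * (1 + p * (k * q + M))) * 2.
  rewrite HM {2 3}Eq -!muln2; nia.
by move/eqP; rewrite eqn_pmul2r // => /eqP.
Qed.

Lemma gsum_ppow p A j : prime p -> odd p -> A %% p = 1 ->
  exists2 u, coprime u p & gsum A (p ^ j) = p ^ j * u.
Proof.
move=> pp op Ap; elim: j => [|j [u cu IH]].
  by exists 1; rewrite ?coprime1n // expn0 mul1n gsumS gsum0.
have Ap' : (A ^ (p ^ j)) %% p = 1.
  by rewrite -modnXm Ap exp1n modn_small // prime_gt1.
have [u' cu' E'] := gsum_p pp op Ap'.
exists (u * u'); first by rewrite coprimeMl cu cu'.
by rewrite expnSr gsum_mul IH E' mulnACA.
Qed.

Local Open Scope group_scope.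

Section HolSec.
Variables (gT : finGroupType) (p e : nat) (c : gT).
Hypotheses (pp : prime p) (op : odd p) (e2 : (2 <= e)%N)
  (defN : [set: gT] = <[c]>) (oN : #|[set: gT]| = (p ^ e)%N).

Lemma comm_all (x y : gT) : commute x y.
Proof.
have : abelian [set: gT] by rewrite defN cycle_abelian.
by move/centsP => H; apply: H; rewrite inE.
Qed.

Lemma oc : #[c] = (p ^ e)%N.
Proof. by rewrite -oN defN. Qed.

Lemma expgpe (x : gT) : x ^+ (p ^ e) = 1.
Proof. by rewrite -oN (@expg_cardG _ [set: gT]%G) ?inE. Qed.

Lemma expg_eqmod (x : gT) m n : m = n %[mod p ^ e] -> x ^+ m = x ^+ n.
Proof. by move=> E; rewrite -(expg_mod m (expgpe x)) E expg_mod // expgpe. Qed.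

Lemma gen (x : gT) : exists X, x = c ^+ X.
Proof.
have : x \in <[c]> by rewrite -defN inE.
by case/cycleP=> i ->; exists i.
Qed.

Lemma cexp_eq X Y : (c ^+ X == c ^+ Y) = (X == Y %[mod p ^ e]).
Proof. by rewrite eq_expg_mod_order oc. Qed.

Definition z0 := c ^+ (p ^ e.-1).

Lemma oz0 : #[z0] = p.
Proof.
rewrite /z0 orderXdiv oc.
  have -> : e = e.-1.+1 by lia.
  by rewrite /= expnS mulnK // expn_gt0 prime_gt0.
by rewrite dvdn_exp2l // leq_pred.
Qed.

Lemma z0_neq1 : z0 != 1.
Proof. by rewrite -order_eq1 oz0; case: p pp => [|[]]. Qed.

Definition lam (b : gT) : {perm gT} := perm (mulgI b).
Lemma lamE b x : lam b x = b * x. Proof. by rewrite permE. Qed.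

Lemma holP s : s \in Hol gT -> exists2 A, coprime A p & forall x, s x = s 1 * x ^+ A.
Proof.
rewrite inE => /existsP[eta /existsP[a /andP[Aa /forallP Hs]]].
have sE x : s x = eta * autm Aa x by rewrite autmE; apply/eqP/Hs.
have a1 : autm Aa 1 = 1 by rewrite morph1.
have [A cA] := gen (autm Aa c).
have aX x : autm Aa x = x ^+ A.
  have [X ->] := gen x.
  rewrite morphX ?inE //; change (autm Aa c ^+ X = (c ^+ X) ^+ A).
  by rewrite cA -!expgM mulnC.
have s1 : s 1 = eta by rewrite sE a1 mulg1.
exists A; last by move=> x; rewrite sE s1 aX.
rewrite coprime_sym prime_coprime //; apply/negP => /dvdnP[k Ek].
have : autm Aa z0 = autm Aa 1.
  rewrite a1 aX /z0 -expgM Ek mulnCA -expnSr prednK; last by apply: leq_trans e2.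
  by rewrite mulnC expgM -oc expg_order expg1n.
by rewrite autmE => /perm_inj/eqP; rewrite (negPf z0_neq1).
Qed.

Lemma holX (s : {perm gT}) b A n : (forall x, s x = b * x ^+ A) ->
  forall x, (s ^+ n) x = b ^+ gsum A n * x ^+ (A ^ n).
Proof.
move=> sE; elim: n => [|n IH] x.
  by rewrite expg0 perm1 gsum0 expg0 mul1g expn0 expg1.
rewrite expgSr permM IH sE gsumSl expgD expg1 expgMn; last exact: comm_all.
by rewrite -!expgM mulgA expnSr mulnC.
Qed.


Definition n0 := (p.-1 * p ^ e.-1)%N.

Lemma pe_gt1 : (1 < p ^ e)%N.
Proof. by rewrite -(exp1n e) ltn_exp2r ?prime_gt1 //; apply: leq_trans e2. Qed.

Lemma e_gt0 : (0 < e)%N. Proof. by apply: leq_trans e2. Qed.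

Lemma mod1_p A : (0 < A)%N -> p %| A - 1 -> A %% p = 1%N.
Proof.
move=> A0 /dvdnP[k Ek]; rewrite -(subnK A0) Ek modnMDl modn_small //.
exact: prime_gt1.
Qed.

Lemma gsum_n0 A : coprime A p -> p ^ e.-1 %| gsum A n0.
Proof.
move=> cA; have A0 : (0 < A)%N.
  by case: A cA => // ; rewrite /coprime gcd0n => /eqP p1; move: (prime_gt1 pp); rewrite p1.
have [dA|ndA] := boolP (p %| A - 1).
  rewrite /n0 mulnC gsum_mul.
  have [u _ ->] := gsum_ppow e.-1 pp op (mod1_p A0 dA).
  by rewrite -mulnA dvdn_mulr.
have cA1 : coprime (A - 1) (p ^ e) by rewrite coprime_pexpr ?e_gt0 // coprime_sym prime_coprime.
have EA : A ^ totient (p ^ e) = 1 %[mod p ^ e].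
  by apply: Euler_exp_totient; rewrite coprime_pexpr ?e_gt0.
rewrite totient_pfactor ?e_gt0 // -/n0 -(gsum_tele _ A0) -{3}(add0n 1%N) in EA.
move/eqP: EA; rewrite eqn_modDr mod0n => H.
rewrite coprime_sym in cA1.
have : p ^ e %| gsum A n0 by rewrite -(Gauss_dvdl _ cA1).
by apply: dvdn_trans; rewrite dvdn_exp2l // leq_pred.
Qed.

Lemma lamX b j : lam b ^+ j = lam (b ^+ j).
Proof.
elim: j => [|j IH]; apply/permP => x; first by rewrite !expg0 perm1 lamE mul1g.
by rewrite expgSr permM IH !lamE expgS mulgA.
Qed.

Lemma holpow s : s \in Hol gT -> exists j, s ^+ n0 = lam z0 ^+ j.
Proof.
move=> /holP[A cA sE].
have A0 : (0 < A)%N.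
  by case: A cA sE => // ; rewrite /coprime gcd0n => /eqP p1; move: (prime_gt1 pp); rewrite p1.
have [g Eg] : exists g, gsum A n0 = (g * p ^ e.-1)%N by apply/dvdnP/gsum_n0.
have [B EB] := gen (s 1).
have EA : A ^ n0 = 1 %[mod p ^ e].
  by rewrite /n0 -totient_pfactor ?e_gt0 // Euler_exp_totient // coprime_pexpr ?e_gt0.
exists (B * g)%N; rewrite lamX; apply/permP => x.
rewrite (holX _ sE) lamE (expg_eqmod x EA) expg1; congr (_ * _).
rewrite EB Eg /z0 -!expgM; congr (c ^+ _).
by rewrite [RHS]mulnC mulnA.
Qed.

Lemma lam_conj s b : s \in Hol gT -> exists A, lam b ^ s = lam b ^+ A.
Proof.
move=> /holP[A _ sE]; exists A; rewrite lamX; apply/permP => y.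
have [w ->] : exists w, y = s w by exists (s^-1 y); rewrite permKV.
rewrite conjgE !permM permK !lamE (sE (b * w)) (sE w) expgMn ?mulgA; last exact: comm_all.
by congr (_ * _); apply: comm_all.
Qed.


Lemma trans_z0 (b : gT) : b != 1 -> exists n, b ^+ n = z0.
Proof.
move=> nb.
have ob : #[b] %| p ^ e by rewrite -oN (@order_dvdG _ [set: gT]%G) ?inE.
have pb : p %| #|<[b]>|.
  case/(dvdn_pfactor _ _ pp): ob => m _ Em.
  rewrite -orderE Em; case: m Em => [|m] Em; last by rewrite expnS dvdn_mulr.
  by move: nb; rewrite -order_eq1 Em eqxx.
have [x xb ox] := Cauchy pp pb.
have : <[x]> == <[z0]> :> {set gT}.
  by rewrite (eq_subG_cyclic (G := [set: gT]%G)) ?subsetT //= ?defN ?cycle_cyclic // -!orderE ox oz0.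
move/eqP => Exz.
have : z0 \in <[b]>.
  by rewrite -cycle_subG -Exz cycle_subG.
by case/cycleP => n ->; exists n.
Qed.

Lemma no_trans (K : {group {perm gT}}) k b :
  lam z0 \notin K -> k \in K -> (forall x, k x = b * x) -> b = 1.
Proof.
move=> nz kK kE; apply/eqP/negPn/negP => nb.
have [n En] := trans_z0 nb.
have : k = lam b by apply/permP => x; rewrite kE lamE.
move=> Ek; move/negP: nz; apply; rewrite -En -lamX -Ek groupX //.
Qed.

Lemma fix_elt k : k \in Hol gT ->
  (forall j b, (forall x, (k ^+ j) x = b * x) -> b = 1) -> exists y, k y = y.
Proof.
move=> kH ntr; have [A cA kE] := holP kH.
have A0 : (0 < A)%N.
  by case: A cA kE => // ; rewrite /coprime gcd0n => /eqP p1; move: (prime_gt1 pp); rewrite p1.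
set b := k 1 in kE.
have kE' x : k x = b * x ^+ (A - 1) * x.
  by rewrite kE -mulgA -expgSr subn1 prednK.
have [dA|ndA] := boolP (p ^ e %| A - 1).
  have b1 : b = 1.
    apply: (ntr 1%N) => x; rewrite expg1 kE' (@expg_eqmod x _ 0); first by rewrite expg0 mulg1.
    by apply/eqP; rewrite mod0n.
  by exists 1; rewrite kE' b1 !expg1n !mul1g.
have A1 : (0 < A - 1)%N by case: (A - 1) ndA => //; rewrite dvdn0.
have [w cw Ew] := pfactor_coprime pp A1.
set t := logn p (A - 1) in Ew.
have te : (t < e)%N.
  rewrite ltnNge; apply/negP => et; move/negP: ndA; apply.
  by rewrite Ew dvdn_mull // dvdn_exp2l.
have [d Ed] : exists d, b = d ^+ (p ^ t).
  case t0 : t => [|t']; first by exists b; rewrite expn0 expg1.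
  have Ap : A %% p = 1%N by apply: mod1_p => //; rewrite Ew -/t t0 expnS dvdn_mull // dvdn_mulr.
  have [u cu Eu] := gsum_ppow (e - t) pp op Ap.
  have EA : A ^ (p ^ (e - t)) = 1 %[mod p ^ e].
    have pe : (p ^ e = p ^ (e - t) * p ^ t)%N by rewrite -expnD subnK // ltnW.
    rewrite -(gsum_tele _ A0) Eu Ew -/t.
    have -> : (p ^ (e - t) * u * (w * p ^ t) = (u * w) * p ^ e)%N by rewrite pe; nia.
    by rewrite -modnDml modnMl.
  have bS : b ^+ (p ^ (e - t) * u) = 1.
    apply/(ntr (p ^ (e - t))%N) => x.
    by rewrite (holX _ kE) Eu (expg_eqmod x EA) expg1.
  have bpt : b ^+ (p ^ (e - t)) = 1.
    apply/eqP; rewrite -order_dvdn; move: bS => /eqP; rewrite -order_dvdn.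
    rewrite Gauss_dvdl //; apply: (@coprime_dvdl _ (p ^ e)).
      by rewrite -oN (@order_dvdG _ [set: gT]%G) ?inE.
    by rewrite coprime_pexpl ?e_gt0 // coprime_sym.
  have [B EB] := gen b.
  have Hd : (p ^ t * p ^ (e - t) %| B * p ^ (e - t))%N.
    rewrite -expnD subnKC ?(ltnW te) //.
    by move: bpt; rewrite EB -expgM => /eqP; rewrite -order_dvdn oc.
  rewrite dvdn_pmul2r ?expn_gt0 ?prime_gt0 // in Hd.
  case/dvdnP: Hd => B' EB'; exists (c ^+ B'); rewrite EB EB' expgM.
  by rewrite -/t t0.
have cNw : coprime #|[set: gT]| w by rewrite oN coprime_pexpl ?e_gt0 // coprime_sym.
set x := (d^-1) ^+ (expg_invn [set: gT] w).
have xw : x ^+ w = d^-1.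
  rewrite /x -expgM mulnC expgM.
  exact: (expgK cNw (x := d^-1)); rewrite inE.
exists x; rewrite kE' Ew expgM xw Ed expVgn mulgV mul1g //.
Qed.


Lemma cycAut : cyclic (Aut [set: gT]).
Proof.
have pN : p.-group [set: gT] by rewrite /pgroup oN pnatX pnat_id.
have cN : cyclic [set: gT] by rewrite defN cycle_cyclic.
have ntN : [set: gT] :!=: 1.
  apply/eqP => E; move: pe_gt1; rewrite -oN E cards1.
  done.
have [m [_ _]] := cyclic_pgroup_Aut_structure pN cN ntN.
have le : logn p #|[set: gT]| = e by rewrite oN pfactorK.
case: ifP => [/eqP|_].
  by rewrite le => E; move: e2; rewrite -(prednK e_gt0) E.
case=> t [_ _ _]; rewrite op; by case=> [[]].
Qed.


Lemma phi_inj (s : {perm gT}) : injective (fun x => (s 1)^-1 * s x).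
Proof. by move=> x y /mulgI /perm_inj. Qed.
Definition phi s := perm (@phi_inj s).
Lemma phiE s x : phi s x = (s 1)^-1 * s x. Proof. by rewrite permE. Qed.

Lemma phi_hol s : s \in Hol gT -> exists A, forall x, phi s x = x ^+ A.
Proof. by case/holP=> A _ sE; exists A => x; rewrite phiE (sE x) mulKg. Qed.

Lemma phiM s t : s \in Hol gT -> t \in Hol gT -> phi (s * t) = phi s * phi t.
Proof.
case/holP=> A _ sE; case/holP=> B _ tE; apply/permP => x.
rewrite permM !phiE !permM (sE x) mulKg (tE (s 1)) (tE (s 1 * x ^+ A)) (tE (x ^+ A)) expgMn; last exact: comm_all.
by rewrite [t 1 * (_ * _)]mulgA !mulKg.
Qed.

Lemma phi_aut s : s \in Hol gT -> phi s \in Aut [set: gT].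
Proof.
case/phi_hol=> A sE; rewrite inE; apply/andP; split.
  by apply/subsetP => x _; rewrite inE.
by apply/morphicP => x y _ _; rewrite !sE expgMn //; exact: comm_all.
Qed.

Lemma fixpt (K : {group {perm gT}}) : K \subset Hol gT -> lam z0 \notin K ->
  exists y, forall k, k \in K -> k y = y.
Proof.
move=> KH nz.
have phiM' : {in K &, {morph phi : x y / x * y}}.
  by move=> x y xK yK; apply: phiM; apply: (subsetP KH).
pose f := Morphism phiM'.
have injf : 'injm f.
  apply/subsetP => k; rewrite !inE => /andP[kK /eqP /= fk].
  have kE x : k x = k 1 * x.
    move: (congr1 (fun q : {perm gT} => q x) fk) => /=; rewrite phiE perm1 => E.
    by rewrite -[in RHS]E mulKVg.
  have k1 : k 1 = 1 by apply: (no_trans nz kK kE).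
  by apply/eqP/permP => x; rewrite kE k1 mul1g perm1.
have cK : cyclic K.
  rewrite -(injm_cyclic injf (subxx K)); apply: cyclicS cycAut.
  apply/subsetP => a /morphimP[k _ kK ->] /=; apply: phi_aut; exact: (subsetP KH).
have [k defK] := cyclicP cK.
have kK : k \in K by rewrite defK cycle_id.
have [y ky] : exists y, k y = y.
  apply: fix_elt; first exact: (subsetP KH).
  move=> j b Hb; apply: (no_trans nz _ Hb); exact: groupX.
exists y => k'; rewrite defK => /cycleP[j ->].
elim: j => [|j IH]; first by rewrite expg0 perm1.
by rewrite expgSr permM IH.
Qed.


Lemma fermat_iter A m : A ^ (p ^ m) = A %[mod p].
Proof.
elim: m => [|m IH]; first by rewrite expn0 expn1.
by rewrite expnSr expnM -modnXm IH modnXm fermat_little.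
Qed.

Lemma sylow_trans (T : {group {perm gT}}) (Q : {group {perm gT}}) :
  [transitive T, on [set: gT] | 'P] -> p.-Sylow(T) Q ->
  exists2 q, q \in Q & q 1 = c.
Proof.
move=> trT sylQ.
have sQT : Q \subset T by case/andP: sylQ.
set T1 := 'C_T[1 | 'P]; set Q1 := 'C_Q[1 | 'P].
have oT : #|T| = (p ^ e * #|T1|)%N.
  rewrite -(Lagrange (subsetIl T 'C[1 | 'P])) mulnC -/T1 -card_orbit.
  by rewrite (atransP trT) ?inE ?oN.
have T10 : (0 < #|T1|)%N by apply: cardG_gt0.
have oQ : #|Q| = (p ^ e * #|T1|`_p)%N.
  have pe_p : partn (p ^ e)%N p = (p ^ e)%N by rewrite p_part pfactorK.
  rewrite (card_Hall sylQ) oT partnM ?pe_p // ?expn_gt0 ?prime_gt0 //.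
have sQ1 : Q1 \subset T1 by apply: setSI.
have pQ1 : p.-group Q1 by apply: pgroupS (subsetIl _ _) (pHall_pgroup sylQ).
have dQ1 : #|Q1| %| #|T1|`_p.
  by rewrite -(part_pnat_id pQ1) partn_dvd ?cardSg.
have idx : p ^ e %| #|Q : Q1|.
  have := Lagrange (subsetIl Q 'C[1 | 'P]); rewrite -/Q1 oQ.
  case/dvdnP: dQ1 => k -> H.
  have E : (#|Q : Q1| * #|Q1| = p ^ e * k * #|Q1|)%N by rewrite mulnC H mulnA.
  move/eqP: E; rewrite eqn_pmul2r ?cardG_gt0 // => /eqP ->; exact: dvdn_mulr.
have orb : orbit 'P Q 1 = [set: gT].
  apply/eqP; rewrite eqEcard subsetT oN card_orbit.
  apply: dvdn_leq => //; exact: indexg_gt0.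
have : c \in orbit 'P Q 1 by rewrite orb inE.
by case/orbitP => q qQ <-; exists q.
Qed.


Lemma big_order (T : {group {perm gT}}) :
  T \subset Hol gT -> [transitive T, on [set: gT] | 'P] ->
  exists2 t, t \in T & p ^ e %| #[t].
Proof.
move=> TH trT; have [Q sylQ] := Sylow_exists p T.
have [q qQ q1] := sylow_trans trT sylQ.
have sQT : Q \subset T by case/andP: sylQ.
have qT : q \in T by apply: (subsetP sQT).
exists q => //.
have [A cA qE] := holP (subsetP TH q qT).
rewrite q1 in qE.
have [m Em] := p_natP (mem_p_elt (pHall_pgroup sylQ) qQ).
have Ap : A %% p = 1%N.
  have qm := expg_order q; rewrite Em in qm.
  have := holX (p ^ m) qE c; rewrite qm perm1.
  have := holX (p ^ m) qE 1; rewrite qm perm1 expg1n mulg1 => <-.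
  rewrite mul1g -{1}(expg1 c) => /eqP; rewrite eq_sym cexp_eq => /eqP E.
  have dp : p %| p ^ e by rewrite -{1}(expn1 p) dvdn_exp2l ?e_gt0.
  rewrite -(fermat_iter A m) -(modn_dvdm _ dp) E (modn_dvdm _ dp) modn_small //.
  exact: prime_gt1.
have [u cu Eu] := gsum_ppow e.-1 pp op Ap.
rewrite Em dvdn_exp2l // leqNgt; apply/negP => me.
have H : q ^+ (p ^ e.-1) = 1.
  by apply/eqP; rewrite -order_dvdn Em dvdn_exp2l // -ltnS prednK ?e_gt0.
have := holX (p ^ e.-1) qE 1; rewrite H perm1 expg1n mulg1 Eu.
move/esym/eqP; rewrite -(expg0 c) cexp_eq mod0n => Hd.
have : p ^ e %| p ^ e.-1 * u by [].
rewrite -{1}(prednK e_gt0) expnS (mulnC (p ^ e.-1)%N) dvdn_pmul2r ?expn_gt0 ?prime_gt0 //.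
by move: cu; rewrite coprime_sym prime_coprime // => /negP.
Qed.

End HolSec.


Lemma stab_card (gT : finGroupType) (G H : {group {perm gT}}) (y : gT) :
  [transitive G, on [set: gT] | 'P] -> H \subset G ->
  #|G : H| = #|[set: gT]| -> #|'C_G[y | 'P]| = #|H|.
Proof.
move=> trG HG iH.
have o1 : #|G : 'C_G[y | 'P]| = #|[set: gT]|.
  by rewrite -card_orbit (atransP trG) ?inE.
have := Lagrange (subsetIl G 'C[y | 'P]); rewrite o1 -iH -(Lagrange HG).
move/eqP; rewrite eqn_pmul2r ?cardG_gt0 ?indexg_gt0 //.
by move/eqP.
Qed.

Unset Implicit Arguments.
Theorem proposition4p2 (gT : finGroupType) (p e : nat)
  (p_prime : prime p) (p_odd : odd p) (e_ge2 : (2 <= e)%N)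
  (N_cyclic : cyclic [set: gT]) (N_order : #|[set: gT]| = (p ^ e)%N)
  (G H : {group {perm gT}})
  (G_hol : G \subset Hol gT) (G_trans : [transitive G, on [set: gT] | 'P])
  (HG : H \subset G) (H_index : #|G : H| = (p ^ e)%N) :
  (exists T : {group {perm gT}},
     [/\ T \subset Hol gT, [transitive T, on [set: gT] | 'P] &
     exists f : {morphism (G / gcore H G) >-> {perm gT}},
       isom (G / gcore H G) T f /\
       f @* (H / gcore H G) = 'C_T[1 | 'P]])
  <->
  (exists2 g, g \in G & H :=: 'C_G[1 | 'P] :^ g).
Proof.
have [c defN] := cyclicP N_cyclic.
have pp := p_prime; have op := p_odd; have e2 := e_ge2; have oN := N_order.
have HH : H \subset Hol gT := subset_trans HG G_hol.
split.
  case=> T [TH trT [f [isof fH]]].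
  have [zH | nzH] := boolP (lam (z0 p e c) \in H).
    exfalso.
    have zC : lam (z0 p e c) \in gcore H G.
      apply/bigcapP => h hG; rewrite mem_conjg.
      have [A ->] := lam_conj pp op e2 defN oN (z0 p e c) (subsetP G_hol _ (groupVr hG)).
      exact: groupX.
    have [t tT ot] := big_order pp op e2 defN oN TH trT.
    case/isomP: isof => injf imf.
    move: tT ot; rewrite -imf => /morphimP[q qD qGC ->{t}] ot.
    rewrite (order_injm injf qD) in ot.
    case/morphimP: qGC ot qD => x xN xG -> ot qD.
    have : coset (gcore H G) x ^+ n0 p e = 1.
      rewrite -morphX //; apply: coset_id.
      have [j ->] := holpow pp op e2 defN oN (subsetP G_hol _ xG).
      exact: groupX.
    move/eqP; rewrite -order_dvdn => dn.
    have := dvdn_trans ot dn; rewrite /n0.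
    have e0 : (0 < e)%N by apply: leq_trans e2.
    rewrite -{1}(prednK e0) expnS dvdn_pmul2r ?expn_gt0 ?prime_gt0 //.
    move/dvdn_leq; rewrite -subn1 subn_gt0 prime_gt1 // => /(_ isT).
    by rewrite subn1 leqNgt ltn_predL prime_gt0.
  have [y Hy] := fixpt pp op e2 defN oN HH nzH.
  have EH : H :=: 'C_G[y | 'P].
    apply/eqP; rewrite eqEcard (stab_card y G_trans HG) ?oN // leqnn andbT.
    apply/subsetP => h hH; rewrite inE (subsetP HG _ hH) /=.
    by apply/astab1P; rewrite /= apermE Hy.
  have : y \in orbit 'P G 1 by rewrite (atransP G_trans) ?inE.
  case/orbitP => g gG Ey; exists g => //.
  by rewrite EH -Ey conjIg (conjGid gG) -astab1_act.
case=> g gG EH.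
have C1 : gcore H G = 1.
  apply/trivgP/subsetP => x xC; rewrite inE; apply/eqP/permP => y; rewrite perm1.
  have : y \in orbit 'P G 1 by rewrite (atransP G_trans) ?inE.
  case/orbitP => k kG Ey.
  have : x \in H :^ (g^-1 * k) by move/bigcapP: xC; apply; rewrite groupM ?groupV.
  rewrite EH -conjsgM mulgA mulgV mul1g conjIg (conjGid kG) -astab1_act Ey.
  by case/setIP => _ /astab1P.
rewrite C1.
exists G; split => //.
pose i1 := invm (@coset1_injm (perm_of gT)).
have sub : G / 1 \subset i1 @*^-1 G.
  apply/subsetP => q /morphimP[x _ xG ->]; apply/morphpreP; split.
    by apply: mem_morphim; rewrite /= norm1 inE.
  rewrite /i1; apply: (@eq_ind _ x (fun z => z \in G) xG); symmetry.
  by apply: (invmE (coset1_injm _)); rewrite /= norm1 inE.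
exists (restrm_morphism sub (comp_morphism i1 (conjgm_morphism G g^-1))).
have im1 : forall A : {group {perm gT}}, A \subset G ->
    restrm_morphism sub (comp_morphism i1 (conjgm_morphism G g^-1)) @* (A / 1) = A :^ g^-1.
  move=> A sAG; rewrite morphim_restrm (setIidPr (quotientS _ sAG)) morphim_comp.
  rewrite /i1 morphim_invm; last by rewrite /= norm1 subsetT.
  by apply: etrans (morphim_conj G g^-1 A) _; rewrite (setIidPr sAG).
split.
  apply/isomP; split; last by rewrite im1 // conjGid ?groupV.
  by apply: injm_restrm; apply: injm_comp; [exact: injm_invm | exact: injm_conj].
by rewrite im1 // EH conjsgK.
Qed.
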